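(* Let $M=A+\Delta-\sigma vv^{\mathsf T}$ be a generalized modularity matrix, and let $x\neq 0$ satisfy $Mx=m_Gx$, with $x$ oriented so that $v^{\mathsf T}x\ge 0$. Then the set $S=\{i\in V: x_i\ge 0\}$ induces a connected subgraph $G(S)$ of $G$.
   Context: Let $V=\{1,\dots,n\}$ and let $A\in\mathbb{R}^{n\times n}$ be the adjacency matrix of an undirected connected weighted graph $G$ on $V$, possibly with loops, i.e. $A=(a_{ij})$ is symmetric, entrywise nonnegative and irreducible. A generalized modularity matrix is any matrix $M=A+\Delta-\sigma vv^{\mathsf T}$ where $\Delta$ is a real diagonal $n\times n$ matrix, $v\in\mathbb{R}^n$ is a nonzero entrywise nonnegative vector, and $\sigma>0$. Eigenvalues of a real symmetric matrix $X$ are ordered $\lambda_1(X)\ge\cdots\ge\lambda_n(X)$; $m_G:=\lambda_1(M)$. For $S\subseteq V$, $G(S)$ denotes the subgraph induced by $S$, whose adjacency matrix is the principal submatrix $A(S)$ of $A$ with indices in $S$; it is connected if the graph on vertex set $S$ in which distinct $i,j$ are adjacent iff $a_{ij}>0$ is connected. *)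

(* Defs.v *)
From HB Require Import structures.
From mathcomp Require Import all_boot all_order all_algebra.
Set Implicit Arguments. Unset Strict Implicit. Unset Printing Implicit Defensive.
Import Order.TTheory GRing.Theory Num.Theory.
Local Open Scope ring_scope.

Section Defs.
Variables (R : rcfType) (n : nat).

Definition sym_mx (A : 'M[R]_n) : Prop := A^T = A.

Definition nonneg_mx (A : 'M[R]_n) : Prop := forall i j, 0 <= A i j.
Definition nonneg_cv (v : 'cV[R]_n) : Prop := forall i, 0 <= v i 0.

(* irreducible matrix: there is no nonempty proper index set S with
   A i j = 0 for all i in S, j not in S (i.e. A is not permutation-similar
   to a block triangular matrix). *)
Definition irreducible_mx (A : 'M[R]_n) : Prop :=
  forall S : {set 'I_n}, S != set0 -> S != setT ->
    exists i j, [/\ i \in S, j \notin S & A i j != 0].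

Definition gen_modularity (A : 'M[R]_n) (d : 'rV[R]_n) (sigma : R)
  (v : 'cV[R]_n) : 'M[R]_n :=
  A + diag_mx d - sigma *: (v *m v^T).

Definition is_lambda1 (M : 'M[R]_n) (m : R) : Prop :=
  eigenvalue M m /\ forall mu, eigenvalue M mu -> mu <= m.

Definition adjA (A : 'M[R]_n) : rel 'I_n := fun i j => (i != j) && (0 < A i j).

Definition induced_connected (A : 'M[R]_n) (S : {set 'I_n}) : Prop :=
  forall i j, i \in S -> j \in S ->
    connect (fun x y => [&& adjA A x y, x \in S & y \in S]) i j.

End Defs.

(* Main.v *)
Require Import Defs.
From HB Require Import structures.
From mathcomp Require Import all_boot all_order all_algebra.
From mathcomp Require Import complex ring lra.
Import Order.TTheory GRing.Theory Num.Theory.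
Local Open Scope ring_scope.

Section PSD.
Local Open Scope sesquilinear_scope.

Lemma psd_lemma (R : rcfType) (n : nat) (M : 'M[R]_n) (m : R) :
  M^T = M -> (forall mu, eigenvalue M mu -> mu <= m) ->
  forall z : 'cV[R]_n, 0 <= (z^T *m (m%:M - M) *m z) 0 0.
Proof.
move=> sM Mle z.
pose f := real_complex R.
pose Mc := map_mx f M.
have Mij : forall i j, M j i = M i j by move=> i j; rewrite -[in LHS]sM mxE.
have freal : forall r : R, f r \is Num.real by move=> r; rewrite complex_real.
have Ch : Mc \is hermsymmx.
  apply/is_hermitianmxP; rewrite expr0 scale1r; apply/matrixP => i j.
  by rewrite !mxE Mij conj_Creal.
pose P := spectralmx Mc; pose D := spectral_diag Mc.
have PU : P \is unitarymx := spectral_unitarymx Mc.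
have /orthomx_spectralP hE := hermitian_normalmx Ch.
have iP : invmx P = P^t* := invmx_unitary PU.
have PPt : P *m P^t* = 1%:M by apply/unitarymxP.
have PtP : P^t* *m P = 1%:M by rewrite -iP mulVmx // spectral_unit.
have Dreal : D \is a realmx := hermitian_spectral_diag_real Ch.
have Dle : forall k, D 0 k <= f m.
  move=> k; have Dkr : D 0 k = f (@complex.Re R (D 0 k)).
    by rewrite /f RRe_real //; move/mxOverP: Dreal; apply.
  have : eigenvalue Mc (D 0 k).
    apply/eigenvalueP; exists (row k P).
      rewrite hE -/P -/D iP !mulmxA -!row_mul PPt mul1mx.
      rewrite row_mul row_diag_mx -scalemxAl; congr (_ *: _).
      by rewrite -rowE.
    apply/eqP => h0; have := congr1 (fun X => X *m P^t*) h0.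
    rewrite mul0mx -row_mul PPt => /rowP /(_ k); rewrite !mxE eqxx /=.
    by move/eqP; rewrite oner_eq0.
  rewrite eigenvalue_root_char /Mc -map_char_poly Dkr fmorph_root.
  by rewrite -eigenvalue_root_char => /Mle; rewrite /f lecR.
pose zc := map_mx f z.
have zcT : zc^T = zc^t* by apply/matrixP => i j; rewrite !mxE conj_Creal.
suff h : 0 <= f ((z^T *m (m%:M - M) *m z) 0 0).
  move: h. rewrite /f. rewrite ler0c. done.
have -> : f ((z^T *m (m%:M - M) *m z) 0 0) = (map_mx f (z^T *m (m%:M - M) *m z)) 0 0.
  by rewrite [RHS]mxE.
rewrite !map_mxM -map_trmx map_mxB map_scalar_mx -/zc -/Mc zcT hE -/P -/D iP.
have -> : (f m)%:M = P^t* *m diag_mx (const_mx (f m)) *m P.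
  by rewrite diag_const_mx mul_mx_scalar -scalemxAl PtP scalemx1.
rewrite -mulmxBl -mulmxBr -linearB /=.
set E := const_mx (f m) - D.
have yt : (P *m zc)^t* = zc^t* *m P^t* by rewrite trmx_mul map_mxM.
rewrite !mulmxA -[zc^t* *m P^t*]yt -mulmxA.
set y := P *m zc.
rewrite mul_mx_diag mxE; apply: sumr_ge0 => i _; rewrite !mxE.
rewrite mulrAC mulrC; apply: mulr_ge0; first by rewrite subr_ge0 Dle.
by rewrite mulrC mul_conjC_ge0.
Qed.

End PSD.

Section Helpers.
Set Implicit Arguments. Unset Strict Implicit.

Section Bil.
Variables (R : realFieldType) (n : nat) (N : 'M[R]_n).
Definition bil (u w : 'cV[R]_n) := (u^T *m N *m w) 0 0.
Lemma bilDl u1 u2 w : bil (u1 + u2) w = bil u1 w + bil u2 w.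
Proof. by rewrite /bil linearD /= !mulmxDl mxE. Qed.
Lemma bilDr u w1 w2 : bil u (w1 + w2) = bil u w1 + bil u w2.
Proof. by rewrite /bil !mulmxDr mxE. Qed.
Lemma bilZl c u w : bil (c *: u) w = c * bil u w.
Proof. by rewrite /bil linearZ /= -!scalemxAl mxE. Qed.
Lemma bilZr c u w : bil u (c *: w) = c * bil u w.
Proof. by rewrite /bil -!scalemxAr mxE. Qed.
Lemma bilBl u1 u2 w : bil (u1 - u2) w = bil u1 w - bil u2 w.
Proof. by rewrite bilDl -scaleN1r bilZl mulN1r. Qed.
Lemma bilBr u w1 w2 : bil u (w1 - w2) = bil u w1 - bil u w2.
Proof. by rewrite bilDr -scaleN1r bilZr mulN1r. Qed.
Lemma bil_sym u w : N^T = N -> bil u w = bil w u.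
Proof.
move=> sN; rewrite /bil.
have -> : (u^T *m N *m w) 0 0 = ((u^T *m N *m w)^T) 0 0 by rewrite [RHS]mxE.
by rewrite !trmx_mul trmxK sN mulmxA.
Qed.

Lemma psd_null : N^T = N -> (forall z, 0 <= bil z z) ->
  forall z, bil z z = 0 -> N *m z = 0.
Proof.
move=> sN psd z q0; set w := N *m z.
have Bzw : bil z w = (w^T *m w) 0 0.
  by rewrite /bil (_ : z^T *m N = w^T) // /w trmx_mul sN.
have Bwz : bil w z = (w^T *m w) 0 0 by rewrite /bil -mulmxA.
set s := (w^T *m w) 0 0.
have s0 : 0 <= s by rewrite /s mxE; apply: sumr_ge0 => i _; rewrite mxE -expr2 sqr_ge0.
have K0 : 0 <= bil w w := psd w.
suff : s = 0.
  rewrite /s mxE => /eqP; rewrite psumr_eq0; last by move=> i _; rewrite mxE -expr2 sqr_ge0.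
  move=> /allP h; apply/colP => i; rewrite [RHS]mxE.
  have := h i (mem_index_enum i); rewrite mxE -expr2 sqrf_eq0 => /eqP ->.
  by [].
apply/eqP; apply: contraT; rewrite neq_lt ltNge s0 /= => sp.
pose t := s / (bil w w + 1).
have := psd (z - t *: w).
rewrite bilBl !bilBr !bilZl !bilZr q0 Bzw Bwz.
have hK : 0 < bil w w + 1 by rewrite ltr_wpDl.
rewrite /t.
set K := bil w w.
have -> : 0 - s / (K + 1) * s - (s / (K + 1) * s - s / (K + 1) * (s / (K + 1) * K))
  = - (s * s / (K + 1) / (K + 1)) * (K + 2).
  by field; rewrite gt_eqF.
rewrite pmulr_lge0 ?ltr_wpDl // oppr_ge0 lt_geF //.
by rewrite !divr_gt0 // mulr_gt0.
Qed.
End Bil.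

Lemma gm_entry (R : rcfType) (n : nat) (A : 'M[R]_n) (d : 'rV[R]_n)
  (sigma : R) (v : 'cV[R]_n) (z : 'cV[R]_n) i :
  (gen_modularity A d sigma v *m z) i 0 =
  \sum_j A i j * z j 0 + d 0 i * z i 0 - sigma * v i 0 * \sum_j v j 0 * z j 0.
Proof.
rewrite /gen_modularity mulmxBl mulmxDl -scalemxAl -mulmxA mul_diag_mx !mxE.
rewrite big_ord1 !mxE -mulrA; congr (_ - _ * (_ * _)).
by apply: eq_bigr => j _; rewrite mxE.
Qed.

End Helpers.
Unset Implicit Arguments.


Theorem lemma3p3 (R : rcfType) (n : nat) (A : 'M[R]_n) (d : 'rV[R]_n)
  (sigma : R) (v : 'cV[R]_n) (m : R) (x : 'cV[R]_n) :
  sym_mx A -> nonneg_mx A -> irreducible_mx A ->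
  nonneg_cv v -> v != 0 -> 0 < sigma ->
  is_lambda1 (gen_modularity A d sigma v) m ->
  x != 0 -> gen_modularity A d sigma v *m x = m *: x ->
  0 <= (v^T *m x) 0 0 ->
  induced_connected A [set i | 0 <= x i 0].
Proof.
move=> sA nA irrA nv v0 sg [eigm Mle] x0 Mx vx.
have Aij : forall i j, A j i = A i j by move=> i j; rewrite -[in LHS]sA mxE.
set M := gen_modularity A d sigma v in Mle Mx *.
have sM : M^T = M.
  by rewrite /M /gen_modularity linearB linearD /= sA tr_diag_mx linearZ /= trmx_mul trmxK.
set S := [set i | 0 <= x i 0].
set N := m%:M - M.
have sN : N^T = N by rewrite /N linearB /= tr_scalar_mx sM.
have psd : forall z, 0 <= bil N z z := @psd_lemma _ _ M m sM Mle.
have Nx : N *m x = 0 by rewrite /N mulmxBl mul_scalar_mx Mx subrr.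
have Bx : forall u, bil N u x = 0 by move=> u; rewrite /bil -mulmxA Nx mulmx0 mxE.
pose res (T : {set 'I_n}) : 'cV[R]_n := \col_i (if i \in T then x i 0 else 0).
pose vd (u : 'cV[R]_n) := \sum_i v i 0 * u i 0.
have Ment : forall z i, (M *m z) i 0 =
  \sum_j A i j * z j 0 + d 0 i * z i 0 - sigma * v i 0 * vd z.
  by move=> z i; rewrite gm_entry.
have Bexp : forall u w, bil N u w = m * \sum_i u i 0 * w i 0
   - \sum_i u i 0 * (\sum_j A i j * w j 0) - \sum_i u i 0 * (d 0 i * w i 0)
   + sigma * vd u * vd w.
  move=> u w; rewrite /bil -mulmxA /N mulmxBl mul_scalar_mx mxE mulr_sumr -!sumrB.
  have -> : sigma * vd u * vd w = \sum_i u i 0 * (sigma * v i 0 * vd w).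
    by rewrite {1}/vd mulr_sumr mulr_suml; apply: eq_bigr => i _; ring.
  rewrite -big_split /=; apply: eq_bigr => i _.
  rewrite [((m *: w - M *m w) : 'cV[R]_n) i 0]mxE [((m *: w) : 'cV[R]_n) i 0]mxE [((- (M *m w)) : 'cV[R]_n) i 0]mxE Ment [u^T 0 i]mxE; ring.
have vdD : forall u w, vd (u + w) = vd u + vd w.
  by move=> u w; rewrite /vd -big_split; apply: eq_bigr => i _; rewrite mxE mulrDr.
have vdZ : forall c u, vd (c *: u) = c * vd u.
  by move=> c u; rewrite /vd mulr_sumr; apply: eq_bigr => i _; rewrite mxE mulrCA.
have vdB : forall u w, vd (u - w) = vd u - vd w.
  by move=> u w; rewrite vdD -scaleN1r vdZ mulN1r.
have vdx : 0 <= vd x.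
  by move: vx; rewrite mxE /vd; under eq_bigr do rewrite mxE.
have resE : forall T i, res T i 0 = if i \in T then x i 0 else 0 by move=> T i; rewrite mxE.
have inS : forall i, (i \in S) = (0 <= x i 0) by move=> i; rewrite inE.
have Bdisj : forall u w : 'cV[R]_n, (forall i, u i 0 * w i 0 = 0) ->
   bil N u w = - \sum_i u i 0 * (\sum_j A i j * w j 0) + sigma * vd u * vd w.
  move=> u w H.
  have h1 : \sum_i u i 0 * w i 0 = 0 by apply: big1 => i _; exact: H.
  have h2 : \sum_i u i 0 * (d 0 i * w i 0) = 0 by apply: big1 => i _; rewrite mulrCA H mulr0.
  by rewrite Bexp h1 h2 mulr0 sub0r subr0.
have core : forall (P Q : {set 'I_n}) (q : 'I_n) (beta gam : R),
  (forall i, i \in P -> i \notin Q) ->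
  (forall i, (i \in S) = (i \in P) || (i \in Q)) ->
  (forall i j, i \in P -> j \in Q -> A i j = 0) ->
  q \in Q -> P != set0 -> 0 < beta -> 0 <= gam ->
  beta * vd (res P) = gam * vd (res Q) -> False.
  move=> P Q q beta gam dPQ hS hE qQ P0 bp gp hab.
  set xP := res P; set xQ := res Q; set x3 := res (~: S).
  have xs : x = xP + xQ + x3.
    apply/colP => i; rewrite !mxE in_setC.
    have := hS i; rewrite inS.
    case: (boolP (i \in P)) => iP.
      by rewrite (negbTE (dPQ i iP)) /= => ->; rewrite !addr0.
    case: (boolP (i \in Q)) => iQ /= ->; first by rewrite add0r addr0.
    by rewrite !add0r.
  have xPi : forall i, 0 <= xP i 0.
    by move=> i; rewrite resE; case: ifP => // iP; rewrite -inS hS iP.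
  have xQi : forall i, 0 <= xQ i 0.
    by move=> i; rewrite resE; case: ifP => // iQ; rewrite -inS hS iQ orbT.
  have x3i : forall i, x3 i 0 <= 0.
    move=> i; rewrite resE; case: ifP => //; rewrite in_setC inS => /negbTE h.
    by rewrite leNgt; apply/negP => /ltW; rewrite h.
  have vdge0 : forall u : 'cV[R]_n, (forall i, 0 <= u i 0) -> 0 <= vd u.
    by move=> u hu; apply: sumr_ge0 => i _; apply: mulr_ge0.
  have vdle0 : forall u : 'cV[R]_n, (forall i, u i 0 <= 0) -> vd u <= 0.
    move=> u hu; rewrite -oppr_ge0 -sumrN; apply: sumr_ge0 => i _.
    by rewrite -mulrN; apply: mulr_ge0 => //; rewrite oppr_ge0.
  set a := vd xP; set b := vd xQ; set c := vd x3.
  have a0 : 0 <= a := vdge0 _ xPi.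
  have b0 : 0 <= b := vdge0 _ xQi.
  have c0 : c <= 0 := vdle0 _ x3i.
  have abc : 0 <= a + b + c by rewrite /a /b /c -!vdD -xs.
  have dPQ' : forall i, xP i 0 * xQ i 0 = 0.
    move=> i; rewrite !resE; case: ifP => iP; last by rewrite mul0r.
    by rewrite (negbTE (dPQ i iP)) mulr0.
  have dP3 : forall i, xP i 0 * x3 i 0 = 0.
    move=> i; rewrite !resE; case: ifP => iP; last by rewrite mul0r.
    by rewrite in_setC hS iP /= mulr0.
  have dQ3 : forall i, xQ i 0 * x3 i 0 = 0.
    move=> i; rewrite !resE; case: ifP => iQ; last by rewrite mul0r.
    by rewrite in_setC hS iQ orbT /= mulr0.
  have AxQ : forall i, i \in P -> \sum_j A i j * xQ j 0 = 0.
    move=> i iP; apply: big1 => j _; rewrite resE; case: ifP => jQ.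
      by rewrite hE // mul0r.
    by rewrite mulr0.
  have BPQ : bil N xP xQ = sigma * a * b.
    rewrite Bdisj // big1 ?oppr0 ?add0r // => i _; rewrite resE.
    by case: ifP => iP; [rewrite AxQ // mulr0 | rewrite mul0r].
  have negA : forall u w : 'cV[R]_n, (forall i, 0 <= u i 0) -> (forall i, w i 0 <= 0) ->
      0 <= - \sum_i u i 0 * (\sum_j A i j * w j 0).
    move=> u w hu hw; rewrite -sumrN; apply: sumr_ge0 => i _.
    rewrite -mulrN -sumrN; apply: mulr_ge0 => //; apply: sumr_ge0 => j _.
    by rewrite -mulrN; apply: mulr_ge0 => //; rewrite oppr_ge0.
  have BP3 : sigma * a * c <= bil N xP x3.
    by rewrite Bdisj // ler_wpDl // negA.
  have BQ3 : sigma * b * c <= bil N xQ x3.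
    by rewrite Bdisj // ler_wpDl // negA.
  have hPx := Bx xP; have hQx := Bx xQ.
  rewrite xs !bilDr in hPx hQx.
  have BQP : bil N xQ xP = bil N xP xQ by apply: bil_sym.
  set z := beta *: xP - gam *: xQ.
  have Bzz : bil N z z = - beta ^+ 2 * bil N xP x3 - gam ^+ 2 * bil N xQ x3
      - (beta + gam) ^+ 2 * bil N xP xQ.
    rewrite /z bilBl !bilBr !bilZl !bilZr BQP.
    have -> : bil N xP xP = - bil N xP xQ - bil N xP x3 by lra.
    have -> : bil N xQ xQ = - bil N xP xQ - bil N xQ x3 by lra.
    ring.
  have key : beta ^+ 2 * (a * c) + gam ^+ 2 * (b * c) + (beta + gam) ^+ 2 * (a * b)
      = beta * a * (beta + gam) * (a + b + c).
    have -> : beta ^+ 2 * (a * c) + gam ^+ 2 * (b * c) + (beta + gam) ^+ 2 * (a * b)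
      = beta * a * (beta + gam) * (a + b + c) + (gam * b - beta * a) * (gam * c + (beta + gam) * a)
      by ring.
    by rewrite -hab mulrC subrr mul0r addr0.
  have Bzle : bil N z z <= 0.
    have h1 : beta ^+ 2 * (sigma * a * c) <= beta ^+ 2 * bil N xP x3.
      by apply: ler_wpM2l => //; rewrite sqr_ge0.
    have h2 : gam ^+ 2 * (sigma * b * c) <= gam ^+ 2 * bil N xQ x3.
      by apply: ler_wpM2l => //; rewrite sqr_ge0.
    have h3 : 0 <= sigma * (beta * a * (beta + gam) * (a + b + c)).
      apply: mulr_ge0; first exact: ltW.
      apply: mulr_ge0 => //; apply: mulr_ge0.
        by apply: mulr_ge0 => //; exact: ltW.
      by apply: addr_ge0 => //; exact: ltW.
    rewrite Bzz BPQ.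
    have e : sigma * (beta * a * (beta + gam) * (a + b + c)) =
      beta ^+ 2 * (sigma * a * c) + gam ^+ 2 * (sigma * b * c) + (beta + gam) ^+ 2 * (sigma * a * b).
      by rewrite -key; ring.
    lra.
  have Bz0 : bil N z z = 0 by apply/eqP; rewrite eq_le Bzle psd.
  have Nz : N *m z = 0 := psd_null sN psd Bz0.
  have Mz : M *m z = m *: z.
    by apply/eqP; rewrite eq_sym -subr_eq0 -mul_scalar_mx -mulmxBl Nz.
  have vdz : vd z = 0 by rewrite /z vdB !vdZ -/a -/b hab mulrC subrr.
  have A3 : forall i j, i \in P -> j \notin S -> A i j = 0.
    move=> i j iP jS.
    have e1 := congr1 (fun X : 'cV[R]_n => X i 0) Mz; have e2 := congr1 (fun X : 'cV[R]_n => X i 0) Mx.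
    rewrite /= Ment vdz mulr0 subr0 [(m *: z) i 0]mxE in e1.
    rewrite /= Ment [(m *: x) i 0]mxE in e2.
    have zi : forall k, z k 0 = beta * xP k 0 - gam * xQ k 0 by move=> k; rewrite !mxE.
    have SzP : \sum_j A i j * z j 0 = beta * \sum_j A i j * xP j 0.
      rewrite mulr_sumr; apply: eq_bigr => k _; rewrite zi.
      rewrite [xQ k 0]resE; case: ifP => kQ; first by rewrite hE // !mul0r mulr0.
      by rewrite mulr0 subr0 mulrCA.
    have Sx : \sum_j A i j * x j 0 = \sum_j A i j * xP j 0 + \sum_j A i j * x3 j 0.
      rewrite -big_split; apply: eq_bigr => k _ /=.
      have xk := congr1 (fun X : 'cV[R]_n => X k 0) xs.
      rewrite /= [((xP + xQ + x3) : 'cV[R]_n) k 0]mxE [((xP + xQ) : 'cV[R]_n) k 0]mxE in xk.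
      rewrite xk !mulrDr; congr (_ + _).
      rewrite [xQ k 0]resE; case: ifP => kQ; first by rewrite hE // !mul0r addr0.
      by rewrite mulr0 addr0.
    rewrite SzP zi [xQ i 0]resE (negbTE (dPQ i iP)) mulr0 subr0 in e1.
    rewrite Sx in e2.
    have xPi' : xP i 0 = x i 0 by rewrite resE iP.
    rewrite xPi' in e1.
    set SP := \sum_j A i j * xP j 0 in e1 e2.
    set S3 := \sum_j A i j * x3 j 0 in e2.
    have e3 : beta * (S3 - sigma * v i 0 * vd x) = 0.
      have -> : beta * (S3 - sigma * v i 0 * vd x) =
        beta * (SP + S3 + d 0 i * x i 0 - sigma * v i 0 * vd x) - (beta * SP + d 0 i * (beta * x i 0))
        by ring.
      rewrite e2 e1; ring.
    move/eqP: e3; rewrite mulf_eq0 gt_eqF //= subr_eq0 => /eqP S3e.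
    have S3ge : 0 <= S3.
      by rewrite S3e; apply: mulr_ge0 => //; apply: mulr_ge0; [exact: ltW | exact: nv].
    have tge : forall k, 0 <= A i k * - x3 k 0.
      by move=> k; apply: mulr_ge0 => //; rewrite oppr_ge0.
    have T0 : \sum_k A i k * - x3 k 0 = 0.
      apply/eqP; rewrite eq_le sumr_ge0 ?andbT //.
      rewrite (eq_bigr (fun k => - (A i k * x3 k 0))); last by move=> k _; rewrite mulrN.
      by rewrite sumrN oppr_le0.
    have := @psumr_eq0P _ _ _ _ (fun k _ => tge k) T0 j isT.
    rewrite [x3 j 0]resE in_setC jS /= => /eqP; rewrite mulf_eq0 oppr_eq0 => /orP[/eqP //|].
    move: jS; rewrite inS => /negP jS /eqP xj0; by exfalso; apply: jS; rewrite xj0.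
  have PT : P != setT.
    apply/eqP => PT; have := dPQ q; rewrite PT inE qQ => /(_ isT) //.
  have [i1 [j1 [hi1 hj1 Aij0]]] := irrA P P0 PT.
  case: (boolP (j1 \in S)) => jS.
    move: jS; rewrite hS (negbTE hj1) /= => jQ.
    by move: Aij0; rewrite hE // eqxx.
  by move: Aij0; rewrite A3 // eqxx.
move=> i0 j0 hi0 hj0.
set e := (X in connect X _ _).
case: (boolP (connect e i0 j0)) => // nc; exfalso.
pose S1 := [set k in S | connect e i0 k].
pose S2 := S :\: S1.
have dS12 : forall i, i \in S1 -> i \notin S2 by move=> i; rewrite !inE => ->.
have dS21 : forall i, i \in S2 -> i \notin S1 by move=> i; rewrite !inE => /andP[/negbTE ->].
have hS12 : forall i, (i \in S) = (i \in S1) || (i \in S2).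
  by move=> i; rewrite !inE; case: (0 <= x i 0); case: (connect e i0 i).
have edge : forall k l, k \in S1 -> l \in S2 -> A k l = 0.
  move=> k l kS1 lS2; apply/eqP; apply: contraT => Akl.
  have kl : k != l by apply/eqP => kl; move: (dS12 k kS1); rewrite kl lS2.
  have Akl' : 0 < A k l by rewrite lt_def Akl nA.
  move: (dS21 l lS2); rewrite !inE; move: lS2; rewrite !inE => /andP[_ lS] /=.
  rewrite lS /=; move: kS1; rewrite !inE => /andP[kS ck].
  suff -> : connect e i0 l by [].
  apply: (connect_trans ck); apply: connect1.
  rewrite /e /adjA Akl' !inS kS lS !andbT.
  by [].
have i0S1 : i0 \in S1 by rewrite !inE -inS hi0 connect0.
have j0S2 : j0 \in S2 by rewrite !inE -inS hj0 nc.
have b0 : 0 <= vd (res S2).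
  apply: sumr_ge0 => i _; rewrite mxE; apply: mulr_ge0 => //.
  by case: ifP => // iS; move: iS; rewrite !inE => /andP[_ ->].
have [bz | bnz] := eqVneq (vd (res S2)) 0.
  apply: (core S2 S1 i0 1 0) => //.
  - by move=> i; rewrite hS12 orbC.
  - by move=> i j iS2 jS1; rewrite Aij edge.
  - by apply/set0Pn; exists j0.
  - by rewrite bz mul0r mulr0.
apply: (core S1 S2 j0 (vd (res S2)) (vd (res S1))) => //.
- by apply/set0Pn; exists i0.
- by rewrite lt_def bnz b0.
- apply: sumr_ge0 => i _; rewrite mxE; apply: mulr_ge0 => //.
  by case: ifP => // iS; move: iS; rewrite !inE => /andP[->].
- by rewrite mulrC.
Qed.
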